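(* Let $(V,L,\varphi,E)$ be a valuation system. Then $\varphi$ is $\Pi$-extendible if and only if for every $b\in L$ and every $\varphi$-convergent sequence $a_1\ge a_2\ge\cdots$ in $L$, $$\textstyle\bigwedge_n a_n\le b \quad\Longrightarrow\quad \bigwedge_n\varphi(a_n)\le\varphi(b).$$
   Context: A valuation system $(V,L,\varphi,E)$ consists of: (i) a lattice $V$ which is $\sigma$-distributive, i.e. for every $a\in V$ and every sequence $(b_n)$ in $V$ whose infimum exists, $\bigwedge_n(a\vee b_n)$ exists and equals $a\vee\bigwedge_n b_n$, and dually for suprema; (ii) a sublattice $L$ of $V$; (iii) a partially ordered abelian group $E$ which is R-complete: whenever $x_1\ge x_2\ge\cdots$ and $y_1\ge y_2\ge\cdots$ in $E$ are such that $\bigwedge_n(x_n+y_n)$ exists, then $\bigwedge_n x_n$ and $\bigwedge_n y_n$ exist, and dually for increasing sequences and suprema; (iv) a valuation $\varphi:L\to E$, i.e. an order-preserving map with $\varphi(a\wedge b)+\varphi(a\vee b)=\varphi(a)+\varphi(b)$. A decreasing sequence $a_1\ge a_2\ge\cdots$ in $L$ is $\varphi$-convergent if $\bigwedge_n a_n$ exists in $V$ and $\bigwedge_n\varphi(a_n)$ exists in $E$. Let $\Pi L:=\{\bigwedge_n a_n: (a_n)\text{ a }\varphi\text{-convergent decreasing sequence in }L\}$ (a sublattice of $V$). $\varphi$ is $\Pi$-extendible if there is a valuation $\Pi\varphi:\Pi L\to E$ with $\Pi\varphi(\bigwedge_n a_n)=\bigwedge_n\varphi(a_n)$ for every $\varphi$-convergent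 decreasing sequence $(a_n)$ in $L$. *)

(* Defs.v *)
From HB Require Import structures.
From mathcomp Require Import all_boot all_order all_algebra.
Set Implicit Arguments. Unset Strict Implicit. Unset Printing Implicit Defensive.
Import Order.Theory GRing.Theory.
Local Open Scope order_scope.

Definition is_inf {d} {T : porderType d} (f : nat -> T) (x : T) : Prop :=
  (forall n, x <= f n) /\ (forall y, (forall n, y <= f n) -> y <= x).

Definition is_sup {d} {T : porderType d} (f : nat -> T) (x : T) : Prop :=
  (forall n, f n <= x) /\ (forall y, (forall n, f n <= y) -> x <= y).

Definition decreasing_seq {d} {T : porderType d} (f : nat -> T) : Prop :=
  forall n, f n.+1 <= f n.
Definition increasing_seq {d} {T : porderType d} (f : nat -> T) : Prop :=
  forall n, f n <= f n.+1.

Definition sigma_distributive {d} (V : latticeType d) : Prop :=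
  (forall (a : V) (b : nat -> V) (m : V), is_inf b m ->
      is_inf (fun n => a `|` b n) (a `|` m)) /\
  (forall (a : V) (b : nat -> V) (m : V), is_sup b m ->
      is_sup (fun n => a `&` b n) (a `&` m)).

Definition sublattice {d} {V : latticeType d} (L : V -> Prop) : Prop :=
  forall a b, L a -> L b -> L (a `&` b) /\ L (a `|` b).

Definition pogroup_axiom (E : porderZmodType) : Prop :=
  forall x y z : E, x <= y -> (x + z)%R <= (y + z)%R.

Definition R_complete (E : porderZmodType) : Prop :=
  (forall x y : nat -> E, decreasing_seq x -> decreasing_seq y ->
     (exists s, is_inf (fun n => (x n + y n)%R) s) ->
     (exists s, is_inf x s) /\ (exists s, is_inf y s)) /\
  (forall x y : nat -> E, increasing_seq x -> increasing_seq y ->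
     (exists s, is_sup (fun n => (x n + y n)%R) s) ->
     (exists s, is_sup x s) /\ (exists s, is_sup y s)).

Definition valuation_on {d} {V : latticeType d} {E : porderZmodType}
  (S : V -> Prop) (phi : V -> E) : Prop :=
  (forall a b, S a -> S b -> a <= b -> phi a <= phi b) /\
  (forall a b, S a -> S b -> (phi (a `&` b) + phi (a `|` b) = phi a + phi b)%R).

Definition valuation_system {d} (V : latticeType d) (L : V -> Prop)
  (E : porderZmodType) (phi : V -> E) : Prop :=
  [/\ sigma_distributive V, sublattice L, pogroup_axiom E, R_complete E
    & valuation_on L phi].

Arguments valuation_system {d} V L E phi.

Definition phi_convergent {d} {V : latticeType d} {E : porderZmodType}
  (L : V -> Prop) (phi : V -> E) (a : nat -> V) : Prop :=
  [/\ (forall n, L (a n)), decreasing_seq a,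
      (exists x, is_inf a x) & (exists y, is_inf (fun n => phi (a n)) y)].

Definition PiL {d} {V : latticeType d} {E : porderZmodType}
  (L : V -> Prop) (phi : V -> E) (x : V) : Prop :=
  exists a, phi_convergent L phi a /\ is_inf a x.

Definition Pi_extendible {d} {V : latticeType d} {E : porderZmodType}
  (L : V -> Prop) (phi : V -> E) : Prop :=
  exists psi : V -> E, (valuation_on (PiL L phi) psi) /\
    (forall (a : nat -> V) (x : V) (y : E), phi_convergent L phi a ->
      is_inf a x -> is_inf (fun n => phi (a n)) y -> psi x = y).

(* Main.v *)
Require Import Defs.
From mathcomp Require Import all_boot all_order all_algebra.
From Stdlib Require Import ClassicalEpsilon FunctionalExtensionality.
Import Order.Theory GRing.Theory.
Local Open Scope order_scope.

Lemma letr {d} {T : porderType d} (x y z : T) : x <= y -> y <= z -> x <= z.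
Proof. exact: le_trans. Qed.

Lemma dec_le {d} {T : porderType d} (f : nat -> T) :
  decreasing_seq f -> forall n m, (n <= m)%N -> f m <= f n.
Proof.
move=> hf n m /subnK <-; elim: (m - n)%N => [|k IH]; first by rewrite add0n.
rewrite addSn; exact: letr (hf _) IH.
Qed.

Arguments dec_le {d T f} hf {n m}.

Lemma inf_uniq {d} {T : porderType d} (f : nat -> T) x x' :
  is_inf f x -> is_inf f x' -> x = x'.
Proof.
move=> [h1 h2] [h1' h2']; apply/le_anti/andP; split; [exact: h2' | exact: h2].
Qed.

Lemma inf_const {d} {T : porderType d} (c : T) : is_inf (fun _ => c) c.
Proof. split => [n|z /(_ 0%N)] //. Qed.

Lemma inf_meet {d} {V : latticeType d} (a a' : nat -> V) x x' :
  is_inf a x -> is_inf a' x' -> is_inf (fun n => a n `&` a' n) (x `&` x').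
Proof.
move=> [h1 h2] [h1' h2']; split => [n|z hz]; first exact: leI2.
rewrite lexI; apply/andP; split; [apply: h2 | apply: h2'] => n;
  apply: letr (hz n) _; [exact: leIl | exact: leIr].
Qed.

Lemma inf_join {d} {V : latticeType d} (sd : sigma_distributive V)
  (a a' : nat -> V) x x' :
  decreasing_seq a -> decreasing_seq a' ->
  is_inf a x -> is_inf a' x' -> is_inf (fun n => a n `|` a' n) (x `|` x').
Proof.
move=> da da' ia ia'; split => [n|z hz]; first exact: leU2 (ia.1 n) (ia'.1 n).
have h1 : forall n, z <= x' `|` a n.
  move=> n; rewrite joinC.
  apply: (sd.1 (a n) a' x' ia').2 => m; case: (leqP n m) => h.
    exact: letr (hz m) (leU2 (dec_le da h) (lexx _)).
  exact: letr (hz n) (leU2 (lexx _) (dec_le da' (ltnW h))).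
rewrite joinC; exact: (sd.1 x' a x ia).2.
Qed.

Lemma pg_add (E : porderZmodType) (pg : pogroup_axiom E) (p q r s : E) :
  p <= q -> r <= s -> (p + r)%R <= (q + s)%R.
Proof.
move=> h1 h2; apply: letr (pg _ _ r h1) _.
rewrite (addrC q) (addrC q); exact: pg.
Qed.

Lemma inf_add (E : porderZmodType) (pg : pogroup_axiom E) (x y : nat -> E) X Y :
  decreasing_seq x -> decreasing_seq y -> is_inf x X -> is_inf y Y ->
  is_inf (fun n => (x n + y n)%R) (X + Y)%R.
Proof.
move=> dx dy ix iy; split => [n|z hz]; first exact: pg_add (ix.1 n) (iy.1 n).
have h1 : forall n, (z - Y)%R <= x n.
  move=> n.
  have h2 : forall m, (z - x n)%R <= y m.
    move=> m.
    have h3 : z <= (x n + y m)%R.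
      case: (leqP n m) => h.
        exact: letr (hz m) (pg _ _ _ (dec_le dx h)).
      apply: letr (hz n) _; rewrite (addrC (x n)) (addrC (x n)).
      exact: pg (dec_le dy (ltnW h)).
    have := pg _ _ (- x n)%R h3; by rewrite (addrC (x n)) addrK.
  have h4 := iy.2 _ h2.
  have := pg _ _ (x n - Y)%R h4.
  by rewrite addrA addrNK (addrC Y) addrNK.
have h5 := ix.2 _ h1.
have := pg _ _ Y h5; by rewrite addrNK.
Qed.

Arguments inf_meet {d V a a' x x'}.
Arguments inf_join {d V} sd {a a' x x'}.
Arguments inf_add {E} pg {x y X Y}.
Arguments inf_uniq {d T f x x'}.

Theorem lemma5p7 (d : Order.disp_t) (V : latticeType d) (L : V -> Prop)
  (E : porderZmodType) (phi : V -> E) :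
  valuation_system V L E phi ->
  (Pi_extendible L phi <->
   forall (b : V) (a : nat -> V) (x : V) (y : E),
     L b -> phi_convergent L phi a -> is_inf a x ->
     is_inf (fun n => phi (a n)) y -> x <= b -> y <= phi b).
Proof.
move=> [sd sl pg rc [phimono phimod]]; split.
  move=> [psi [[psimono _] psiext]] b a x y Lb ca ia iy xb.
  have cb : phi_convergent L phi (fun _ => b).
    split; [by [] | by move=> n; exact: lexx | exists b; exact: inf_const
                 | exists (phi b); exact: inf_const].
  rewrite -(psiext a x y ca ia iy) -(psiext _ b _ cb (inf_const b) (inf_const _)).
  apply: psimono => //; [exists a | exists (fun _ => b); split => //; exact: inf_const].
  by [].
move=> H.
have key : forall a a' x x' y y', phi_convergent L phi a -> phi_convergent L phi a' ->
   is_inf a x -> is_inf a' x' -> is_inf (fun n => phi (a n)) y ->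
   is_inf (fun n => phi (a' n)) y' -> x <= x' -> y <= y'.
  move=> a a' x x' y y' ca ca' ia ia' iy iy' xx'.
  apply: iy'.2 => m; apply: (H (a' m) a x y) => //.
    by case: ca' => La' _ _ _; exact: La'.
  exact: letr xx' (ia'.1 m).
pose P x y := exists a, phi_convergent L phi a /\ is_inf a x /\ is_inf (fun n => phi (a n)) y.
pose psi x := epsilon (inhabits 0%R) (P x).
have psiE : forall a x y, phi_convergent L phi a -> is_inf a x ->
    is_inf (fun n => phi (a n)) y -> psi x = y.
  move=> a x y ca ia iy.
  have : P x (psi x).
    apply: epsilon_spec; exists y; exists a; split => //.
  move=> [a' [ca' [ia' iy']]].
  apply/le_anti/andP; split; [apply: (key a' a x x) | apply: (key a a' x x)] => //; exact: lexx.
exists psi; split; last exact: psiE.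
split.
  move=> x x' [a [ca ia]] [a' [ca' ia']] xx'.
  case: (ca) => _ _ _ [y iy]; case: (ca') => _ _ _ [y' iy'].
  rewrite (psiE a x y) // (psiE a' x' y') //; exact: (key a a' x x' y y').
move=> x x' [a [ca ia]] [a' [ca' ia']].
case: (ca) => La da _ [y iy]; case: (ca') => La' da' _ [y' iy'].
pose m n := a n `&` a' n; pose j n := a n `|` a' n.
have Lm n : L (m n) by exact: (sl _ _ (La n) (La' n)).1.
have Lj n : L (j n) by exact: (sl _ _ (La n) (La' n)).2.
have dm : decreasing_seq m by move=> n; exact: leI2 (da n) (da' n).
have dj : decreasing_seq j by move=> n; exact: leU2 (da n) (da' n).
have dpm : decreasing_seq (fun n => phi (m n)) by move=> n; exact: phimono.
have dpj : decreasing_seq (fun n => phi (j n)) by move=> n; exact: phimono.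
have dpa : decreasing_seq (fun n => phi (a n)) by move=> n; exact: phimono.
have dpa' : decreasing_seq (fun n => phi (a' n)) by move=> n; exact: phimono.
have isum : is_inf (fun n => (phi (m n) + phi (j n))%R) (y + y')%R.
  have -> : (fun n => (phi (m n) + phi (j n))%R) = (fun n => (phi (a n) + phi (a' n))%R).
    apply: functional_extensionality => n; exact: phimod.
  exact: inf_add.
have [[u iu] [v iv]] := rc.1 _ _ dpm dpj (ex_intro _ _ isum).
have im := inf_meet ia ia'.
have ij := inf_join sd da da' ia ia'.
have cm : phi_convergent L phi m by split => //; [exists (x `&` x') | exists u].
have cj : phi_convergent L phi j by split => //; [exists (x `|` x') | exists v].
rewrite (psiE m _ u cm im iu) (psiE j _ v cj ij iv) (psiE a x y) // (psiE a' x' y') //.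
exact: inf_uniq (inf_add pg dpm dpj iu iv) isum.
Qed.
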